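(* Let $\mathbf{x}\in\mathbb{R}^d$, $\mathbf{x}\neq 0$, and consider the training set $\{(\mathbf{x},1),(-\mathbf{x},-1)\}$. (1) Let $k$ be the FC-NTK kernel defined below, and $g_k$ its minimum norm interpolant on this training set. Then for all $\mathbf{z}\in\mathbb{R}^d$, $g_k(\mathbf{z})\ge 0$ if and only if $\mathbf{z}^T\mathbf{x}\ge 0$. (2) Let $K$ be the CNTK-GAP kernel defined below (with patch size $q$, $1\le q\le d$), and assume the $2\times 2$ Gram matrix $H_K$ of $K$ on $\{\mathbf{x},-\mathbf{x}\}$ is invertible. Then either for all $\mathbf{z}\in\mathbb{R}^d$ [$g_K(\mathbf{z})\ge 0$ iff $\mathbf{z}^T\mathbf{1}_d\ge 0$], or for all $\mathbf{z}\in\mathbb{R}^d$ [$g_K(\mathbf{z})\ge 0$ iff $\mathbf{z}^T\mathbf{1}_d\le 0$]; i.e., the hyperplane $\mathbf{z}^T\mathbf{1}_d=0$ is the decision boundary.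
   Context: FC-NTK (NTK of the bias-free two-layer ReLU network $\mathbf{v}^T\sigma(W\mathbf{x})$ with Gaussian initialization): for $\mathbf{z},\mathbf{x}\in\mathbb{R}^n$, $k(\mathbf{z},\mathbf{x})=\frac{1}{\pi}\left(2\mathbf{z}^T\mathbf{x}(\pi-\phi)+\|\mathbf{z}\|\|\mathbf{x}\|\sin\phi\right)$, where $\phi=\arccos\left(\frac{\mathbf{z}^T\mathbf{x}}{\|\mathbf{z}\|\|\mathbf{x}\|}\right)$ is the angle between $\mathbf{z}$ and $\mathbf{x}$ (with $k=0$ if either argument is $0$). CNTK-GAP (for the bias-free two-layer circular-convolution network with global average pooling, filter size $q$): for $\mathbf{z},\mathbf{x}\in\mathbb{R}^d$ let $\bar{\mathbf{z}}_i=(z_i,z_{(i+1)\bmod d},\dots,z_{(i+q-1)\bmod d})^T\in\mathbb{R}^q$ be the cyclic patches ($1\le i\le d$, indices interpreted cyclically in $\{1,\dots,d\}$), similarly $\bar{\mathbf{x}}_j$; then $K(\mathbf{z},\mathbf{x})=\frac{1}{d^2}\sum_{i=1}^d\sum_{j=1}^d k(\bar{\mathbf{z}}_i,\bar{\mathbf{x}}_j)$ with $k$ the FC-NTK on $\mathbb{R}^q$. For a kernel $k$ and training data $\{(\mathbf{x}_i,y_i)\}_{i=1}^n$ with invertible Gram matrix $H_k=(k(\mathbf{x}_i,\mathbf{x}_j))_{i,j}$, the minimum norm interpolant (limit $\lambda\to 0$ of kernel ridge regression) is $g_k(\mathbf{z})=(k(\mathbf{z},\mathbf{x}_1),\dots,k(\mathbf{z},\mathbf{x}_n))H_k^{-1}\mathbf{y}$,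 $\mathbf{y}=(y_1,\dots,y_n)^T$. $\mathbf{1}_d$ is the all-ones vector. *)

(* Defs.v *)
From mathcomp Require Import all_boot all_order all_algebra.
From mathcomp Require Import all_classical all_reals all_analysis.
Set Implicit Arguments. Unset Strict Implicit. Unset Printing Implicit Defensive.
Import Order.TTheory GRing.Theory Num.Theory.
Local Open Scope ring_scope.

Section Defs.
Variable R : realType.

Definition dotv (n : nat) (z x : 'rV[R]_n) : R := \sum_(i < n) z 0 i * x 0 i.
Definition normv (n : nat) (z : 'rV[R]_n) : R := Num.sqrt (dotv z z).

Definition angle (n : nat) (z x : 'rV[R]_n) : R :=
  acos (dotv z x / (normv z * normv x)).

(* FC-NTK of the bias-free two-layer ReLU network *)
Definition fc_ntk (n : nat) (z x : 'rV[R]_n) : R :=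
  if (z == 0) || (x == 0) then 0
  else pi^-1 * (2 * dotv z x * (pi - angle z x) + normv z * normv x * sin (angle z x)).

Lemma ord_pos (d : nat) (i : 'I_d) : (0 < d)%N.
Proof. exact: (leq_ltn_trans (leq0n i) (ltn_ord i)). Qed.

Definition cyc_idx (d : nat) (i : 'I_d) (j : nat) : 'I_d :=
  Ordinal (ltn_pmod (i + j) (ord_pos i)).

Definition patch (d q : nat) (z : 'rV[R]_d) (i : 'I_d) : 'rV[R]_q :=
  \row_(j < q) z 0 (cyc_idx i j).

Definition cntk_gap (d q : nat) (z x : 'rV[R]_d) : R :=
  (d%:R ^+ 2)^-1 * \sum_(i < d) \sum_(j < d) fc_ntk (patch q z i) (patch q x j).

Definition gram (n m : nat) (k : 'rV[R]_n -> 'rV[R]_n -> R) (X : 'I_m -> 'rV[R]_n)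
  : 'M[R]_m := \matrix_(i, j) k (X i) (X j).

Definition min_norm_interp (n m : nat) (k : 'rV[R]_n -> 'rV[R]_n -> R)
  (X : 'I_m -> 'rV[R]_n) (y : 'cV[R]_m) (z : 'rV[R]_n) : R :=
  ((\row_(i < m) k z (X i)) *m invmx (gram k X) *m y) 0 0.

Definition trainX (d : nat) (x : 'rV[R]_d) : 'I_2 -> 'rV[R]_d :=
  fun i => if val i == 0%N then x else - x.
Definition trainY : 'cV[R]_2 := \col_(i < 2) (if val i == 0%N then 1 else -1).

End Defs.

(* Main.v *)
Require Import Defs.
From mathcomp Require Import all_boot all_order all_algebra.
From mathcomp Require Import all_classical all_reals all_analysis.
From mathcomp Require Import ring lra.
Import Order.TTheory GRing.Theory Num.Theory.
Local Open Scope ring_scope.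

Section S.
Variable R : realType.

Lemma interp2 {n} (k : 'rV[R]_n -> 'rV[R]_n -> R) (x z : 'rV[R]_n) :
  gram k (trainX x) \in unitmx ->
  k (-x) (-x) = k x x -> k (-x) x = k x (-x) ->
  k x x - k x (-x) != 0 /\
  min_norm_interp k (trainX x) (trainY R) z = (k z x - k z (-x)) / (k x x - k x (-x)).
Proof.
move=> hG e1 e2.
set A := k x x; set B := k x (-x).
have hAB : A + B != 0.
  apply/negP => /eqP hAB.
  have h := mulKmx hG (const_mx 1 : 'cV[R]_2).
  have h0 : gram k (trainX x) *m (const_mx 1 : 'cV[R]_2) = 0.
    apply/matrixP => i j; rewrite !mxE !big_ord_recl big_ord0 !mxE.
    case: i => [[|[|i]] Hi] //=; rewrite /trainX /=.
      by rewrite !mulr1 addr0.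
    by rewrite !mulr1 addr0 e1 e2 addrC.
  move: h; rewrite h0 mulmx0 => h; have := congr1 (fun M : 'cV[R]_2 => M ord0 ord0) h; rewrite !mxE => /eqP.
  by rewrite eq_sym oner_eq0.
set v := invmx (gram k (trainX x)) *m trainY R.
have hv : gram k (trainX x) *m v = trainY R := mulKVmx hG _.
have vE : invmx (gram k (trainX x)) *m trainY R = v by [].
clearbody v.
set v0 := v ord0 ord0; set v1 := v (lift ord0 ord0) ord0.
have q0 := congr1 (fun M : 'cV[R]_2 => M ord0 ord0) hv.
have q1 := congr1 (fun M : 'cV[R]_2 => M (lift ord0 ord0) ord0) hv.
move: q0 q1; rewrite /= !mxE !big_ord_recl !big_ord0 !mxE /trainX /= -/v0 -/v1.
rewrite e1 e2 -/A -/B !addr0 => q0 q1.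
have hs : v0 + v1 = 0.
  have : (A + B) * (v0 + v1) = 0.
    have -> : (A + B) * (v0 + v1) = (A * v0 + B * v1) + (B * v0 + A * v1) by ring.
    by rewrite q0 q1 addrN.
  by move/eqP; rewrite mulf_eq0 (negbTE hAB) => /eqP.
have e1v : v1 = - v0 by apply/eqP; rewrite -addr_eq0 addrC hs.
have hq : (A - B) * v0 = 1 by rewrite -q0 e1v; ring.
have hAB' : A - B != 0.
  by apply/negP => /eqP h; move: hq; rewrite h mul0r => /eqP; rewrite eq_sym oner_eq0.
split => //.
rewrite /min_norm_interp -mulmxA vE !mxE !big_ord_recl !big_ord0 !mxE /trainX /= -/v0 -/v1.
rewrite addr0 e1v.
have -> : v0 = (A - B)^-1 by apply: (mulfI hAB'); rewrite hq divff.
by rewrite mulrN -mulNr -mulrDl.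
Qed.

Lemma dotvNr {n} (z x : 'rV[R]_n) : dotv z (- x) = - dotv z x.
Proof. by rewrite /dotv -sumrN; apply: eq_bigr => i _; rewrite mxE mulrN. Qed.
Lemma dotvNl {n} (z x : 'rV[R]_n) : dotv (- z) x = - dotv z x.
Proof. by rewrite /dotv -sumrN; apply: eq_bigr => i _; rewrite mxE mulNr. Qed.
Lemma normvN {n} (z : 'rV[R]_n) : normv (- z) = normv z.
Proof. by rewrite /normv dotvNl dotvNr opprK. Qed.
Lemma dotv0l {n} (x : 'rV[R]_n) : dotv 0 x = 0.
Proof. by rewrite /dotv big1 // => i _; rewrite mxE mul0r. Qed.
Lemma dotv0r {n} (x : 'rV[R]_n) : dotv x 0 = 0.
Proof. by rewrite /dotv big1 // => i _; rewrite mxE mulr0. Qed.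
Lemma dotv_ge0 {n} (x : 'rV[R]_n) : 0 <= dotv x x.
Proof. by rewrite /dotv; apply: sumr_ge0 => i _; rewrite -expr2 sqr_ge0. Qed.
Lemma dotv_gt0 {n} {x : 'rV[R]_n} : x != 0 -> 0 < dotv x x.
Proof.
move=> hx; rewrite lt_def dotv_ge0 andbT; apply/negP => /eqP h.
move/negP: hx; apply; apply/eqP/rowP => i; rewrite mxE.
have := h; rewrite /dotv => /eqP; rewrite psumr_eq0 => [/allP /(_ i)|].
  by rewrite mem_index_enum => /(_ isT) /implyP /(_ isT); rewrite mulf_eq0 orbb => /eqP.
by move=> j _; rewrite -expr2 sqr_ge0.
Qed.
Lemma normv_sqr {n} (x : 'rV[R]_n) : normv x * normv x = dotv x x.
Proof. by rewrite /normv -expr2 sqr_sqrtr // dotv_ge0. Qed.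

Lemma sum_sq_expand {n} (z x : 'rV[R]_n) (b c : R) :
  \sum_(i < n) (z 0 i * b - x 0 i * c) ^+ 2 =
  b ^+ 2 * dotv z z - (2 * b * c) * dotv z x + c ^+ 2 * dotv x x.
Proof.
rewrite /dotv !mulr_sumr -sumrB -big_split /=.
by apply: eq_bigr => i _; ring.
Qed.

Lemma cauchy {n} (z x : 'rV[R]_n) : dotv z x ^+ 2 <= dotv z z * dotv x x.
Proof.
have [->|hx] := eqVneq x 0; first by rewrite dotv0r dotv0l expr0n /= mulr0.
have hb := dotv_gt0 hx.
set a := dotv z z; set b := dotv x x; set c := dotv z x.
have h : \sum_(i < n) (z 0 i * b - x 0 i * c) ^+ 2 = b * (b * a - c ^+ 2).
  have -> : b * (b * a - c ^+ 2) = b ^+ 2 * a - (2 * b * c) * c + c ^+ 2 * b by ring.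
  by rewrite sum_sq_expand.
have : 0 <= b * (b * a - c ^+ 2).
  by rewrite -h; apply: sumr_ge0 => i _; rewrite sqr_ge0.
rewrite pmulr_rge0 // subr_ge0 => h2.
by rewrite mulrC.
Qed.

Lemma fc_ntk_diff {n} (u v : 'rV[R]_n) : fc_ntk u v - fc_ntk u (- v) = 2 * dotv u v.
Proof.
rewrite /fc_ntk oppr_eq0.
have [->|hu] := eqVneq u 0; first by rewrite /= dotv0l mulr0 subrr.
have [->|hv] := eqVneq v 0; first by rewrite /= dotv0r mulr0 subrr.
rewrite /= /angle dotvNr normvN.
set t := dotv u v / (normv u * normv v).
have ht : -1 <= t <= 1.
  have hu' := dotv_gt0 hu; have hv' := dotv_gt0 hv.
  have hn : 0 < normv u * normv v.
    by rewrite mulr_gt0 // /normv sqrtr_gt0.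
  have : t ^+ 2 <= 1.
    rewrite /t expr_div_n exprMn !expr2 !normv_sqr ler_pdivrMr; last by rewrite mulr_gt0.
    by rewrite mul1r -expr2 cauchy.
  move=> h; apply/andP; split; nra.
have ht' : -1 <= - t <= 1.
  by move: ht => /andP[h1 h2]; apply/andP; split; lra.
rewrite (mulNr (dotv u v)) -/t !sin_acos // sqrrN acosN //.
have hpi : pi != 0 :> R by rewrite gt_eqF // pi_gt0.
move: hpi; generalize (@pi R) => p hp.
by field.
Qed.

Lemma fc_ntkNN {n} (u v : 'rV[R]_n) : fc_ntk (- u) (- v) = fc_ntk u v.
Proof. by rewrite /fc_ntk /angle !oppr_eq0 dotvNl dotvNr opprK !normvN. Qed.
Lemma fc_ntkNl {n} (u v : 'rV[R]_n) : fc_ntk (- u) v = fc_ntk u (- v).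
Proof. by rewrite -{1}(opprK v) fc_ntkNN. Qed.

Lemma fc_ntk_opp {n} (x : 'rV[R]_n) : x != 0 -> fc_ntk x (- x) = 0.
Proof.
move=> hx; rewrite /fc_ntk oppr_eq0 (negbTE hx) /= /angle dotvNr normvN normv_sqr.
rewrite mulNr divff ?gt_eqF ?dotv_gt0 // acosN1 subrr mulr0 sinpi !mulr0 addr0.
by rewrite mulr0.
Qed.

Lemma part1 {d} (x : 'rV[R]_d) (hx : x != 0) (z : 'rV[R]_d) :
  0 <= min_norm_interp (@fc_ntk R d) (trainX x) (trainY R) z <-> 0 <= dotv z x.
Proof.
have hD := dotv_gt0 hx.
have eA : fc_ntk x x = 2 * dotv x x by rewrite -fc_ntk_diff fc_ntk_opp // subr0.
have hG : gram (@fc_ntk R d) (trainX x) \in unitmx.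
  have -> : gram (@fc_ntk R d) (trainX x) = (2 * dotv x x)%:M.
    apply/matrixP => i j; rewrite !mxE /trainX.
    case: i => [[|[|i]] Hi] //=; case: j => [[|[|j]] Hj] //=.
    - by rewrite fc_ntk_opp.
    - by rewrite fc_ntkNl fc_ntk_opp.
    - by rewrite fc_ntkNN eA.
  by rewrite unitmxE det_scalar unitfE expf_neq0 // mulf_neq0 // gt_eqF.
have [_ ->] := interp2 _ _ z hG (fc_ntkNN x x) (fc_ntkNl x x).
rewrite !fc_ntk_diff ler_pdivlMr ?mul0r ?pmulr_rge0 //.
by rewrite mulr_gt0.
Qed.

Lemma patchN {d} (q : nat) (x : 'rV[R]_d) j : Defs.patch q (- x) j = - Defs.patch q x j.
Proof. by apply/rowP => l; rewrite !mxE. Qed.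
Lemma cntkNN {d} (q : nat) (z x : 'rV[R]_d) : cntk_gap q (- z) (- x) = cntk_gap q z x.
Proof.
rewrite /cntk_gap; congr (_ * _); apply: eq_bigr => i _; apply: eq_bigr => j _.
by rewrite !patchN fc_ntkNN.
Qed.
Lemma cntkNl {d} (q : nat) (z x : 'rV[R]_d) : cntk_gap q (- z) x = cntk_gap q z (- x).
Proof. by rewrite -{1}(opprK x) cntkNN. Qed.

Lemma cyc_inj {d} (l : nat) : injective (fun i : 'I_d => cyc_idx i l).
Proof.
move=> i j /(congr1 val) /= /eqP; rewrite eqn_modDr !modn_small // => /eqP h.
exact: val_inj.
Qed.

Lemma sum_cyc {d} (l : nat) (f : 'I_d -> R) :
  \sum_(i < d) f (cyc_idx i l) = \sum_(i < d) f i.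
Proof. by rewrite [RHS](reindex_inj (@cyc_inj d l)). Qed.

Lemma sum_patch {d} (q : nat) (z x : 'rV[R]_d) :
  \sum_(i < d) \sum_(j < d) dotv (Defs.patch q z i) (Defs.patch q x j) =
  q%:R * ((\sum_(i < d) z 0 i) * (\sum_(i < d) x 0 i)).
Proof.
rewrite /dotv.
under eq_bigr => i _ do rewrite exchange_big /=.
rewrite exchange_big /=.
under eq_bigr => l _ do under eq_bigr => i _ do under eq_bigr => j _ do rewrite !mxE.
transitivity (\sum_(l < q) (\sum_(i < d) z 0 (cyc_idx i l)) * (\sum_(j < d) x 0 (cyc_idx j l))).
  apply: eq_bigr => l _; rewrite mulr_suml; apply: eq_bigr => i _; by rewrite mulr_sumr.
have e : forall l : nat, (\sum_(i < d) z 0 (cyc_idx i l)) * (\sum_(j < d) x 0 (cyc_idx j l)) = (\sum_(i < d) z 0 i) * (\sum_(i < d) x 0 i).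
  by move=> l; rewrite (sum_cyc l (z 0)) (sum_cyc l (x 0)).
rewrite (eq_bigr (fun=> (\sum_(i < d) z 0 i) * (\sum_(i < d) x 0 i))); last by move=> l _; exact: e.
rewrite sumr_const card_ord.
by rewrite mulr_natl.
Qed.

Lemma cntk_diff {d} (q : nat) (z x : 'rV[R]_d) :
  cntk_gap q z x - cntk_gap q z (- x) =
  (d%:R ^+ 2)^-1 * (2 * (q%:R * ((\sum_(i < d) z 0 i) * (\sum_(i < d) x 0 i)))).
Proof.
rewrite /cntk_gap -mulrBr -sum_patch; congr (_ * _).
rewrite mulr_sumr -sumrB; apply: eq_bigr => i _; rewrite mulr_sumr -sumrB; apply: eq_bigr => j _.
by rewrite patchN fc_ntk_diff.
Qed.

Lemma dotv1 {d} (z : 'rV[R]_d) : dotv z (const_mx 1) = \sum_(i < d) z 0 i.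
Proof. by apply: eq_bigr => i _; rewrite mxE mulr1. Qed.

Lemma part2 {d} (x : 'rV[R]_d) (q : nat) :
  gram (@cntk_gap R d q) (trainX x) \in unitmx ->
     (forall z : 'rV[R]_d,
        0 <= min_norm_interp (@cntk_gap R d q) (trainX x) (trainY R) z
        <-> 0 <= dotv z (const_mx 1))
     \/
     (forall z : 'rV[R]_d,
        0 <= min_norm_interp (@cntk_gap R d q) (trainX x) (trainY R) z
        <-> dotv z (const_mx 1) <= 0).
Proof.
move=> hG.
have I z := interp2 _ _ z hG (cntkNN q x x) (cntkNl q x x).
have [Sx eSx] : {s : R | s = \sum_(i < d) x 0 i} by exists (\sum_(i < d) x 0 i).
have [c ec] : {c : R | c = (d%:R ^+ 2)^-1 * (2 * q%:R)} by exists ((d%:R ^+ 2)^-1 * (2 * q%:R)).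
have hS w : cntk_gap q w x - cntk_gap q w (- x) = c * ((\sum_(i < d) w 0 i) * Sx).
  by rewrite cntk_diff ec eSx; ring.
have [hne _] := I x.
move: hne; rewrite hS -eSx mulf_eq0 negb_or => /andP[hc]; rewrite mulf_eq0 negb_or andbb => hSx.
have gE z : min_norm_interp (@cntk_gap R d q) (trainX x) (trainY R) z
   = (\sum_(i < d) z 0 i) / Sx.
  have [_ ->] := I z; rewrite !hS -eSx. by field; apply/andP.
have [hneg|hpos|h0] := ltgtP Sx 0.
- right => z; rewrite gE dotv1 ler_ndivlMr // mul0r; done.
- left => z; rewrite gE dotv1 ler_pdivlMr // mul0r; done.
- by move: hSx; rewrite h0 eqxx.
Qed.
End S.

Theorem theorem2 (R : realType) (d : nat) (x : 'rV[R]_d) (hx : x != 0) :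
  (forall z : 'rV[R]_d,
     0 <= min_norm_interp (@fc_ntk R d) (trainX x) (trainY R) z <-> 0 <= dotv z x)
  /\
  (forall q : nat, (1 <= q <= d)%N ->
     gram (@cntk_gap R d q) (trainX x) \in unitmx ->
     (forall z : 'rV[R]_d,
        0 <= min_norm_interp (@cntk_gap R d q) (trainX x) (trainY R) z
        <-> 0 <= dotv z (const_mx 1))
     \/
     (forall z : 'rV[R]_d,
        0 <= min_norm_interp (@cntk_gap R d q) (trainX x) (trainY R) z
        <-> dotv z (const_mx 1) <= 0)).
Proof.
split; first exact: part1.
by move=> q _; apply: part2.
Qed.
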